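(* Let $q\in\mathbb{C}$ with $0<|q|<1$ and $l,m,n,u,v\in\mathbb{N}$. Then \[ \frac{1}{(q)_{l+m}(q)_{l+n}(q)_u(q)_v} \sum_{k=0}^\infty\frac{q^{k^2} (q)_{l+m+n-k}(q)_{u+v+k}} {(q)_k (q)_{l-k}(q)_{m-k}(q)_{n-k} (q)_{u+k}(q)_{v+k}} =\frac{1}{(q)_{l+u}(q)_{l+v}(q)_m(q)_n} \sum_{k=0}^\infty\frac{q^{k^2} (q)_{l+u+v-k}(q)_{m+n+k}} {(q)_k (q)_{l-k}(q)_{u-k}(q)_{v-k} (q)_{m+k}(q)_{n+k}}, \] and \[ \frac{1}{(q)_{l+m+1}(q)_{l+n+1}(q)_u(q)_v} \sum_{k=0}^\infty\frac{q^{k^2+k} (q)_{l+m+n-k+1}(q)_{u+v+k+1}} {(q)_k (q)_{l-k}(q)_{m-k}(q)_{n-k} (q)_{u+k+1}(q)_{v+k+1}} =\frac{1}{(q)_{l+u+1}(q)_{l+v+1}(q)_m(q)_n} \sum_{k=0}^\infty\frac{q^{k^2+k} (q)_{l+u+v-k+1}(q)_{m+n+k+1}} {(q)_k (q)_{l-k}(q)_{u-k}(q)_{v-k} (q)_{m+k+1}(q)_{n+k+1}}. \]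
   Context: $(q)_n=(q;q)_n=(1-q)(1-q^2)\cdots(1-q^n)$ for $n\ge0$ (with $(q)_0=1$), and $1/(q)_n=0$ for $n<0$. *)

(* Defs.v *)
From mathcomp Require Import all_boot all_order all_algebra.
From mathcomp Require Import complex.
From mathcomp Require Import reals.
Set Implicit Arguments. Unset Strict Implicit. Unset Printing Implicit Defensive.
Import Order.TTheory GRing.Theory Num.Theory.
Local Open Scope ring_scope.

Definition qpoch (F : ringType) (q : F) (n : nat) : F :=
  \prod_(1 <= i < n.+1) (1 - q ^+ i).

(* 1/(q)_n with the convention 1/(q)_n = 0 for n < 0 (n an integer) *)
Definition invqp (F : unitRingType) (q : F) (n : int) : F :=
  match n with
  | Posz m => (qpoch q m)^-1
  | Negz _ => 0
  end.

(* Main.v *)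
Require Import Defs.
From mathcomp Require Import all_boot all_order all_algebra.
From mathcomp Require Import complex.
From mathcomp Require Import reals.
From mathcomp Require Import zify ring.
Import Order.TTheory GRing.Theory Num.Theory.
Set Implicit Arguments. Unset Strict Implicit.
Local Open Scope ring_scope.

Lemma qpochS (F : ringType) (q : F) n : qpoch q n.+1 = qpoch q n * (1 - q ^+ n.+1).
Proof. by rewrite /qpoch big_nat_recr. Qed.

Lemma qpoch0 (F : ringType) (q : F) : qpoch q 0 = 1.
Proof. by rewrite /qpoch big_geq. Qed.

Lemma invqp_neg (F : unitRingType) (q : F) (x : int) : x < 0 -> invqp q x = 0.
Proof. by case: x. Qed.

Lemma invqp_S (F : fieldType) (q : F) (Hq : forall n, qpoch q n != 0) (n : nat) :
  invqp q n%:Z = invqp q n.+1%:Z * (1 - q ^+ n.+1).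
Proof.
have hc : 1 - q ^+ n.+1 != 0.
  by move: (Hq n.+1); rewrite qpochS mulf_eq0 negb_or => /andP[].
by rewrite /invqp qpochS invfM -mulrA mulVf // mulr1.
Qed.

Lemma invqp_sub (F : fieldType) (q : F) (Hq : forall n, qpoch q n != 0) (n j : nat) :
  invqp q (n%:Z - j.+1%:Z) = invqp q (n%:Z - j%:Z) * (1 - q ^+ (n - j)).
Proof.
case: (ltnP j n) => h.
  rewrite !subzn ?(ltnW h) //.
  have -> : (n - j = (n - j.+1).+1)%N by lia.
  exact: invqp_S.
rewrite invqp_neg; last by rewrite subr_lt0 ltz_nat; lia.
case: (eqVneq n j) => [->|hne].
  by rewrite subnn expr0 (subrr (1:F)) mulr0.
by rewrite invqp_neg ?mul0r // subr_lt0 ltz_nat; lia.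
Qed.
Definition tS (F : unitRingType) (q : F) (a u v p j : nat) : F :=
  q ^+ (j*j + a*j) * qpoch q (u+v+p+a-j) * invqp q (p%:Z - j%:Z) * invqp q (a+j)%N%:Z
  * invqp q j%:Z * invqp q (u%:Z - j%:Z) * invqp q (v%:Z - j%:Z).
Arguments tS {F}.

Definition Gc (F : unitRingType) (q : F) (a u v p j : nat) : F :=
  - (q ^+ (p.+1 - j) * (1 - q ^+ j) * (1 - q ^+ (a + j)) * tS q a u v p.+1 j).
Arguments Gc {F}.

Lemma tS_zero (F : unitRingType) (q : F) a u v p j :
  (u < j)%N || (v < j)%N || (p < j)%N -> tS q a u v p j = 0.
Proof.
move=> h; rewrite /tS.
case/orP: h => [/orP[]|] h.
- by rewrite (@invqp_neg _ q (u%:Z - j%:Z)) ?mulr0 ?mul0r // subr_lt0 ltz_nat.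
- by rewrite (@invqp_neg _ q (v%:Z - j%:Z)) ?mulr0 ?mul0r // subr_lt0 ltz_nat.
- by rewrite (@invqp_neg _ q (p%:Z - j%:Z)) ?mulr0 ?mul0r // subr_lt0 ltz_nat.
Qed.

Lemma cert (F : fieldType) (q : F) (Hq : forall n, qpoch q n != 0) a u v p j :
  (j <= p.+1)%N ->
  tS q a u v p.+1 j * ((1 - q ^+ (p+a).+1) * (1 - q ^+ p.+1))
  - tS q a u v p j * ((1 - q ^+ (u+p+a).+1) * (1 - q ^+ (v+p+a).+1))
  = Gc q a u v p j.+1 - Gc q a u v p j.
Proof.
move=> hj.
case: (eqVneq j p.+1) => [->|hjp].
  rewrite (@tS_zero _ q a u v p p.+1) ?ltnSn ?orbT // /Gc (@tS_zero _ q a u v p.+1 p.+2) ?ltnSn ?orbT //.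
  rewrite subnn expr0 (_ : (a + p.+1 = (p+a).+1)%N); last by lia.
  ring.
have hjp' : (j <= p)%N by lia.
case: (boolP ((j <= u)%N && (j <= v)%N)) => [/andP[hu hv]|huv]; last first.
  have h1 : forall pp jj, (j <= jj)%N -> tS q a u v pp jj = 0.
    by move=> pp jj hjj; apply: tS_zero; move: huv; rewrite negb_and -!ltnNge; lia.
  rewrite /Gc !h1 //; ring.
rewrite /Gc /tS.
have e : p%:Z - j%:Z = p.+1%:Z - j.+1%:Z by rewrite !subzn.
rewrite (_ : (u + v + p.+1 + a - j = (u + v + p + a - j).+1)%N); last by lia.
rewrite (_ : (u + v + p.+1 + a - j.+1 = (u + v + p + a - j))%N); last by lia.
rewrite e !(invqp_sub Hq) (_ : (a + j.+1 = (a+j).+1)%N); last by lia.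
rewrite (invqp_S Hq (a+j)) (invqp_S Hq j).
rewrite qpochS.
rewrite (_ : ((p+a).+1 = (p-j)+1+a+j)%N); last by lia.
rewrite (_ : (p.+1 = (p-j)+1+j)%N); last by lia.
rewrite (_ : ((u+p+a).+1 = (u-j)+(p-j)+1+a+j+j)%N); last by lia.
rewrite (_ : ((v+p+a).+1 = (v-j)+(p-j)+1+a+j+j)%N); last by lia.
rewrite (_ : ((u + v + p + a - j).+1 = (u-j)+(v-j)+(p-j)+1+a+j+j)%N); last by lia.
rewrite (_ : ((p-j)+1+j - j = (p-j)+1)%N); last by lia.
rewrite (_ : ((p-j)+1+j - j.+1 = (p-j))%N); last by lia.
rewrite (_ : (j.+1 * j.+1 + a * j.+1 = (j*j + a*j) + j + j + 1 + a)%N); last by lia.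
rewrite (_ : ((a + j).+1 = a + j + 1)%N); last by lia.
rewrite (_ : (j.+1 = j + 1)%N); last by lia.
rewrite !exprD !expr1.
ring.
Qed.
Lemma onesub_neq0 (F : fieldType) (q : F) (Hq : forall n, qpoch q n != 0) n :
  1 - q ^+ n.+1 != 0.
Proof. by move: (Hq n.+1); rewrite qpochS mulf_eq0 negb_or => /andP[]. Qed.

Lemma saal (F : fieldType) (q : F) (Hq : forall n, qpoch q n != 0) a u v p :
  \sum_(0 <= j < p.+1) tS q a u v p j =
  qpoch q (u+p+a) * qpoch q (v+p+a) * qpoch q (u+v+a) /
  (qpoch q (p+a) * qpoch q p * qpoch q (a+u) * qpoch q (a+v) * qpoch q u * qpoch q v).
Proof.
elim: p => [|p IH].
  rewrite big_nat1 /tS !subr0 !addn0 !subn0 !add0n muln0 expr0 mul1r /invqp qpoch0.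
  rewrite (addnC a u) (addnC a v).
  field.
  by rewrite !Hq oner_neq0.
set c1 := (1 - q ^+ (p+a).+1) * (1 - q ^+ p.+1).
set c0 := (1 - q ^+ (u+p+a).+1) * (1 - q ^+ (v+p+a).+1).
have c1n : c1 != 0 by rewrite mulf_neq0 ?onesub_neq0.
have key : (\sum_(0 <= j < p.+2) tS q a u v p.+1 j) * c1 = (\sum_(0 <= j < p.+1) tS q a u v p j) * c0.
  have T := @telescope_sumr_eq _ 0 p.+2 (Gc q a u v p)
     (fun j => tS q a u v p.+1 j * c1 - tS q a u v p j * c0) (leq0n _)
     (fun k hk => cert Hq a u v (proj2 (andP hk) : (k <= p.+1)%N)).
  move: T.
  rewrite /Gc (@tS_zero _ q a u v p.+1 p.+2) ?ltnSn ?orbT // expr0 subrr.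
  rewrite !(mulr0, mul0r) oppr0 subrr sumrB -!mulr_suml => /eqP; rewrite subr_eq0 => /eqP ->.
  by rewrite big_nat_recr //= (@tS_zero _ q a u v p p.+1) ?ltnSn ?orbT // addr0.
apply: (mulIf c1n); rewrite key IH /c0 /c1.
rewrite (_ : (u + p.+1 + a = (u+p+a).+1)%N); last by lia.
rewrite (_ : (v + p.+1 + a = (v+p+a).+1)%N); last by lia.
rewrite (_ : (p.+1 + a = (p+a).+1)%N); last by lia.
rewrite !qpochS.
field.
by rewrite !Hq !onesub_neq0.
Qed.
Lemma saalB (F : fieldType) (q : F) (Hq : forall n, qpoch q n != 0) a u v p B :
  (p <= B)%N ->
  \sum_(0 <= j < B.+1) tS q a u v p j =
  qpoch q (u+p+a) * qpoch q (v+p+a) * qpoch q (u+v+a) /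
  (qpoch q (p+a) * qpoch q p * qpoch q (a+u) * qpoch q (a+v) * qpoch q u * qpoch q v).
Proof.
move=> hp; rewrite (@big_cat_nat _ _ _ p.+1) //= ?saal // big_nat_cond big1 ?addr0 //.
move=> j /andP[/andP[hj _] _]; apply: tS_zero; by rewrite hj orbT.
Qed.

Lemma invqp_nat (F : unitRingType) (q : F) (n : nat) : invqp q n%:Z = (qpoch q n)^-1.
Proof. by []. Qed.

Definition Tm (F : unitRingType) (q : F) (s l m n u v k : nat) : F :=
  q ^+ (k*k + s*k) * qpoch q (l+m+n-k+s) * qpoch q (u+v+k+s) * invqp q k%:Z
  * invqp q (l%:Z - k%:Z) * invqp q (m%:Z - k%:Z) * invqp q (n%:Z - k%:Z)
  * invqp q (u+k+s)%N%:Z * invqp q (v+k+s)%N%:Z.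

Definition Dm (F : unitRingType) (q : F) (s l m n u v k j : nat) : F :=
  q ^+ (k*k + j*j + k*j + s*k + s*j) * qpoch q (l+m+n-k+s) * qpoch q (l+u+v-j+s)
  * invqp q k%:Z * invqp q j%:Z * invqp q (k+j+s)%N%:Z * invqp q (l%:Z - k%:Z - j%:Z)
  * invqp q (m%:Z - k%:Z) * invqp q (n%:Z - k%:Z)
  * invqp q (u%:Z - j%:Z) * invqp q (v%:Z - j%:Z).

Lemma halfsum (F : fieldType) (q : F) (Hq : forall n, qpoch q n != 0) s l m n u v M :
  (l <= M)%N ->
  invqp q (l+m+s)%N%:Z * invqp q (l+n+s)%N%:Z * invqp q u%:Z * invqp q v%:Z *
    \sum_(0 <= k < M.+1) Tm q s l m n u v k
  = qpoch q (l+s) * invqp q (l+m+s)%N%:Z * invqp q (l+n+s)%N%:Z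
    * invqp q (l+u+s)%N%:Z * invqp q (l+v+s)%N%:Z *
    \sum_(0 <= k < M.+1) \sum_(0 <= j < M.+1) Dm q s l m n u v k j.
Proof.
move=> hM; rewrite !mulr_sumr; apply: eq_bigr => k _.
case: (leqP k l) => hk; last first.
  rewrite /Tm (@invqp_neg _ q (l%:Z - k%:Z)) ?subr_lt0 ?ltz_nat //.
  rewrite big1 ?(mulr0, mul0r) // => j _.
  rewrite /Dm (@invqp_neg _ q (l%:Z - k%:Z - j%:Z)) ?(mulr0, mul0r) //.
  lia.
have hs := saalB Hq (k+s) u v (leq_trans (leq_subr k l) hM).
have -> : \sum_(0 <= j < M.+1) Dm q s l m n u v k j =
   q ^+ (k*k + s*k) * qpoch q (l+m+n-k+s) * invqp q k%:Z * invqp q (m%:Z - k%:Z)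
   * invqp q (n%:Z - k%:Z) * \sum_(0 <= j < M.+1) tS q (k+s) u v (l-k) j.
  rewrite mulr_sumr; apply: eq_bigr => j _.
  rewrite /Dm /tS (_ : l%:Z - k%:Z - j%:Z = (l - k)%N%:Z - j%:Z); last by rewrite subzn.
  case: (leqP j (l - k)) => hj; last first.
    by rewrite (@invqp_neg _ q ((l - k)%N%:Z - j%:Z)) ?(mulr0, mul0r) // subr_lt0 ltz_nat.
  rewrite (_ : (u + v + (l - k) + (k + s) - j = l + u + v - j + s)%N); last by lia.
  rewrite (_ : (k + s + j = k + j + s)%N); last by lia.
  rewrite (_ : (k*k + j*j + k*j + s*k + s*j = (k*k + s*k) + (j*j + (k+s)*j))%N); last by lia.
  rewrite exprD; ring.
rewrite hs /Tm subzn // !invqp_nat.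
rewrite (_ : (u + (l - k) + (k + s) = l + u + s)%N); last by lia.
rewrite (_ : (v + (l - k) + (k + s) = l + v + s)%N); last by lia.
rewrite (_ : (l - k + (k + s) = l + s)%N); last by lia.
rewrite (_ : (u + v + (k + s) = u + v + k + s)%N); last by lia.
rewrite (_ : (k + s + u = u + k + s)%N); last by lia.
rewrite (_ : (k + s + v = v + k + s)%N); last by lia.
field.
by rewrite !Hq.
Qed.
Lemma Dm_sym (F : comUnitRingType) (q : F) s l m n u v k j :
  Dm q s l u v m n k j = Dm q s l m n u v j k.
Proof.
rewrite /Dm (addnC k j) (_ : l%:Z - k%:Z - j%:Z = l%:Z - j%:Z - k%:Z); last by ring.
rewrite (_ : (k*k + j*j + k*j + s*k + s*j = j*j + k*k + j*k + s*j + s*k)%N); last by lia.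
ring.
Qed.

Lemma main_s (F : fieldType) (q : F) (Hq : forall n, qpoch q n != 0) s l m n u v :
  invqp q (l+m+s)%N%:Z * invqp q (l+n+s)%N%:Z * invqp q u%:Z * invqp q v%:Z *
    \sum_(0 <= k < (l+m+n+u+v).+1) Tm q s l m n u v k
  = invqp q (l+u+s)%N%:Z * invqp q (l+v+s)%N%:Z * invqp q m%:Z * invqp q n%:Z *
    \sum_(0 <= k < (l+m+n+u+v).+1) Tm q s l u v m n k.
Proof.
have hM : (l <= l+m+n+u+v)%N by lia.
rewrite (halfsum Hq s m n u v hM) (halfsum Hq s u v m n hM).
rewrite exchange_big_nat.
under [in RHS]eq_bigr => k _ do under eq_bigr => j _ do rewrite Dm_sym.
ring.
Qed.

Lemma Hq_of (R : realType) (q : R[i]) : `|q| < 1 -> forall n, qpoch q n != 0.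
Proof.
move=> hq; elim=> [|n IH]; first by rewrite qpoch0 oner_neq0.
rewrite qpochS mulf_neq0 // subr_eq0; apply/negP => /eqP h.
have : `|q ^+ n.+1| < 1 by rewrite normrX exprn_ilt1.
by rewrite -h normr1 ltxx.
Qed.

Unset Implicit Arguments. Set Strict Implicit.
Local Open Scope complex_scope.

Theorem corollary5p7 (R : realType) (q : R[i]) (l m n u v : nat) :
  0 < `|q| -> `|q| < 1 ->
  (invqp q (l + m)%N%:Z * invqp q (l + n)%N%:Z * invqp q u%:Z * invqp q v%:Z *
    \sum_(0 <= k < (l + m + n + u + v).+1)
      q ^+ (k * k) * qpoch q (l + m + n - k)%N * qpoch q (u + v + k)%N *
      invqp q k%:Z * invqp q (l%:Z - k%:Z) * invqp q (m%:Z - k%:Z)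
      * invqp q (n%:Z - k%:Z) * invqp q (u + k)%N%:Z * invqp q (v + k)%N%:Z
   = invqp q (l + u)%N%:Z * invqp q (l + v)%N%:Z * invqp q m%:Z * invqp q n%:Z *
    \sum_(0 <= k < (l + m + n + u + v).+1)
      q ^+ (k * k) * qpoch q (l + u + v - k)%N * qpoch q (m + n + k)%N *
      invqp q k%:Z * invqp q (l%:Z - k%:Z) * invqp q (u%:Z - k%:Z)
      * invqp q (v%:Z - k%:Z) * invqp q (m + k)%N%:Z * invqp q (n + k)%N%:Z)
  /\
  (invqp q (l + m + 1)%N%:Z * invqp q (l + n + 1)%N%:Z * invqp q u%:Z * invqp q v%:Z *
    \sum_(0 <= k < (l + m + n + u + v).+1)
      q ^+ (k * k + k) * qpoch q (l + m + n - k + 1)%N * qpoch q (u + v + k + 1)%N *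
      invqp q k%:Z * invqp q (l%:Z - k%:Z) * invqp q (m%:Z - k%:Z)
      * invqp q (n%:Z - k%:Z) * invqp q (u + k + 1)%N%:Z * invqp q (v + k + 1)%N%:Z
   = invqp q (l + u + 1)%N%:Z * invqp q (l + v + 1)%N%:Z * invqp q m%:Z * invqp q n%:Z *
    \sum_(0 <= k < (l + m + n + u + v).+1)
      q ^+ (k * k + k) * qpoch q (l + u + v - k + 1)%N * qpoch q (m + n + k + 1)%N *
      invqp q k%:Z * invqp q (l%:Z - k%:Z) * invqp q (u%:Z - k%:Z)
      * invqp q (v%:Z - k%:Z) * invqp q (m + k + 1)%N%:Z * invqp q (n + k + 1)%N%:Z).
Proof.
move=> _ hq; have Hq := Hq_of hq.
split.
- have H := main_s Hq 0 l m n u v.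
  have E1 : forall a b c d : nat,
    \sum_(0 <= k < (l + m + n + u + v).+1) Tm q 0 l a b c d k =
    \sum_(0 <= k < (l + m + n + u + v).+1)
      q ^+ (k * k) * qpoch q (l + a + b - k)%N * qpoch q (c + d + k)%N *
      invqp q k%:Z * invqp q (l%:Z - k%:Z) * invqp q (a%:Z - k%:Z)
      * invqp q (b%:Z - k%:Z) * invqp q (c + k)%N%:Z * invqp q (d + k)%N%:Z.
    by move=> a b c d; apply: eq_bigr => k _; rewrite /Tm mul0n !addn0.
  by rewrite !E1 !addn0 in H.
- have H := main_s Hq 1 l m n u v.
  have E1 : forall a b c d : nat,
    \sum_(0 <= k < (l + m + n + u + v).+1) Tm q 1 l a b c d k =
    \sum_(0 <= k < (l + m + n + u + v).+1)
      q ^+ (k * k + k) * qpoch q (l + a + b - k + 1)%N * qpoch q (c + d + k + 1)%N *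
      invqp q k%:Z * invqp q (l%:Z - k%:Z) * invqp q (a%:Z - k%:Z)
      * invqp q (b%:Z - k%:Z) * invqp q (c + k + 1)%N%:Z * invqp q (d + k + 1)%N%:Z.
    by move=> a b c d; apply: eq_bigr => k _; rewrite /Tm mul1n.
  by rewrite !E1 in H.
Qed.
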